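(* Let $\mathcal{A}$ and $\mathcal{U}$ be Banach algebras, let $\theta$ be a nonzero character on $\mathcal{A}$, and let $\mathcal{X}$ be a Banach $(\mathcal{A}\times_{\theta}\mathcal{U})$-bimodule, regarded also as a Banach $\mathcal{A}$-bimodule and as a Banach $\mathcal{U}$-bimodule via the induced actions described in the context. Let $D:\mathcal{A}\times_{\theta}\mathcal{U}\to\mathcal{X}$ be a linear mapping. Then the following are equivalent: (i) $D$ is a derivation; (ii) there are linear mappings $\delta_1:\mathcal{A}\to\mathcal{X}$ and $\delta_2:\mathcal{U}\to\mathcal{X}$ with $D((a,u))=\delta_1(a)+\delta_2(u)$ for all $a\in\mathcal{A},u\in\mathcal{U}$, such that $\delta_1$ and $\delta_2$ are derivations and \[a\delta_2(u)+\delta_1(a)u=\theta(a)\delta_2(u)=\delta_2(u)a+u\delta_1(a)\qquad(a\in\mathcal{A},\,u\in\mathcal{U}).\]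
   Context: For Banach algebras $\mathcal{A},\mathcal{U}$ and a nonzero character (nonzero multiplicative linear functional) $\theta$ on $\mathcal{A}$, the Lau product $\mathcal{A}\times_{\theta}\mathcal{U}$ is the Banach space $\mathcal{A}\times\mathcal{U}$ with norm $\|(a,u)\|=\|a\|+\|u\|$ and multiplication $(a,u)(a',u')=(aa',\theta(a)u'+\theta(a')u+uu')$. Given a Banach $(\mathcal{A}\times_{\theta}\mathcal{U})$-bimodule $\mathcal{X}$, it is a Banach $\mathcal{A}$-bimodule via $a x=(a,0)x$, $xa=x(a,0)$, and a Banach $\mathcal{U}$-bimodule via $ux=(0,u)x$, $xu=x(0,u)$. A derivation from a Banach algebra $\mathcal{B}$ into a Banach $\mathcal{B}$-bimodule $\mathcal{Y}$ is a linear map $\delta$ with $\delta(bc)=b\delta(c)+\delta(b)c$. *)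

(* Defs.v *)
From HB Require Import structures.
From mathcomp Require Import all_boot all_order all_algebra.
From mathcomp Require Import all_classical all_reals all_analysis.
Set Implicit Arguments. Unset Strict Implicit. Unset Printing Implicit Defensive.
Import Order.TTheory GRing.Theory Num.Theory.
Import numFieldNormedType.Exports.
Local Open Scope ring_scope.

Definition lin_map (K : numFieldType) (V W : lmodType K) (f : V -> W) : Prop :=
  forall (k : K) (x y : V), f (k *: x + y) = k *: f x + f y.

Definition bilinear_op (K : numFieldType) (V W Z : lmodType K)
  (m : V -> W -> Z) : Prop :=
  (forall y, lin_map (fun x => m x y)) /\ (forall x, lin_map (m x)).

Definition banach_algebra (K : numFieldType) (V : completeNormedModType K)
  (mul : V -> V -> V) : Prop :=
  [/\ bilinear_op mul,
      (forall x y z, mul x (mul y z) = mul (mul x y) z)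
    & (forall x y, `|mul x y| <= `|x| * `|y|)].

Definition nonzero_character (K : numFieldType) (V : completeNormedModType K)
  (mul : V -> V -> V) (theta : V -> K) : Prop :=
  [/\ lin_map (theta : V -> K^o),
      (forall x y, theta (mul x y) = theta x * theta y)
    & exists x, theta x != 0].

Definition lau_mul (K : numFieldType) (A U : completeNormedModType K)
  (mulA : A -> A -> A) (mulU : U -> U -> U) (theta : A -> K)
  (p q : A * U) : A * U :=
  (mulA p.1 q.1, theta p.1 *: q.2 + theta q.1 *: p.2 + mulU p.2 q.2).

Definition lau_norm (K : numFieldType) (A U : completeNormedModType K)
  (p : A * U) : K := `|p.1| + `|p.2|.

Definition banach_bimodule (K : numFieldType) (T : lmodType K)
  (mulB : T -> T -> T) (nB : T -> K) (X : completeNormedModType K)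
  (l : T -> X -> X) (r : X -> T -> X) : Prop :=
  [/\ bilinear_op l /\ bilinear_op r,
      (forall b c x, l (mulB b c) x = l b (l c x)),
      (forall b c x, r x (mulB b c) = r (r x b) c),
      (forall b c x, l b (r x c) = r (l b x) c)
    & exists M : K, 0 <= M /\ forall b x,
        `|l b x| <= M * nB b * `|x| /\ `|r x b| <= M * nB b * `|x| ].

Definition derivation (K : numFieldType) (T : lmodType K) (mulB : T -> T -> T)
  (X : lmodType K) (l : T -> X -> X) (r : X -> T -> X) (d : T -> X) : Prop :=
  lin_map d /\ forall b c, d (mulB b c) = l b (d c) + r (d b) c.

(* Main.v *)
Require Import Defs.
From HB Require Import structures.
From mathcomp Require Import all_boot all_order all_algebra.
From mathcomp Require Import all_classical all_reals all_analysis.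
Import Order.TTheory GRing.Theory Num.Theory.
Import numFieldNormedType.Exports.
Local Open Scope ring_scope.
Set Implicit Arguments. Unset Strict Implicit.

Section L.
Variables (K : numFieldType) (V W : lmodType K) (f : V -> W) (H : lin_map f).
Lemma linD x y : f (x + y) = f x + f y.
Proof. by have := H 1 x y; rewrite !scale1r. Qed.
Lemma lin0 : f 0 = 0.
Proof. have := linD 0 0; rewrite addr0 => h; apply: (@addrI _ (f 0)); by rewrite addr0 -h. Qed.
Lemma linZ k x : f (k *: x) = k *: f x.
Proof. by have := H k x 0; rewrite addr0 lin0 addr0. Qed.
End L.

Lemma pairE (K : numFieldType) (A U : lmodType K) (a : A) (u : U) :
  (a, u) = (a, 0) + (0, u).
Proof. by change ((a,u) = (a+0, 0+u)); rewrite addr0 add0r. Qed.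
Lemma pairZ (K : numFieldType) (A U : lmodType K) (k : K) (a : A) (u : U) :
  k *: (a, u) = (k *: a, k *: u).
Proof. by []. Qed.
Lemma pairD (K : numFieldType) (A U : lmodType K) (a b : A) (u v : U) :
  (a, u) + (b, v) = (a + b, u + v).
Proof. by []. Qed.

Theorem theorem2p1 (K : numFieldType) (A U X : completeNormedModType K)
  (mulA : A -> A -> A) (mulU : U -> U -> U) (theta : A -> K)
  (l : A * U -> X -> X) (r : X -> A * U -> X) (D : A * U -> X) :
  banach_algebra mulA -> banach_algebra mulU ->
  nonzero_character mulA theta ->
  banach_bimodule (lau_mul mulA mulU theta) (@lau_norm K A U) l r ->
  lin_map D ->
  (derivation (lau_mul mulA mulU theta) l r D <->
   exists (d1 : A -> X) (d2 : U -> X),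
     [/\ lin_map d1 /\ lin_map d2,
         (forall a u, D (a, u) = d1 a + d2 u),
         derivation mulA (fun a x => l (a, 0) x) (fun x a => r x (a, 0)) d1,
         derivation mulU (fun u x => l (0, u) x) (fun x u => r x (0, u)) d2
       & forall a u,
           l (a, 0) (d2 u) + r (d1 a) (0, u) = theta a *: d2 u /\
           theta a *: d2 u = r (d2 u) (a, 0) + l (0, u) (d1 a)]).
Proof.
move=> [[mA1 mA2] _ _] [[mU1 mU2] _ _] [th _ _] [[[l1 l2] [r1 r2]] _ _ _ _] HD.
have th0 : theta 0 = 0 by have := lin0 th.
have mA0l y : mulA 0 y = 0 by apply: (lin0 (mA1 y)).
have mA0r x : mulA x 0 = 0 by apply: (lin0 (mA2 x)).
have mU0l y : mulU 0 y = 0 by apply: (lin0 (mU1 y)).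
have mU0r x : mulU x 0 = 0 by apply: (lin0 (mU2 x)).
have lD p q x : l (p + q) x = l p x + l q x by apply: (linD (l1 x)).
have lxD p x y : l p (x + y) = l p x + l p y by apply: (linD (l2 p)).
have rD p q x : r x (p + q) = r x p + r x q by apply: (linD (r2 x)).
have rxD p x y : r (x + y) p = r x p + r y p by apply: (linD (r1 p)).
have lxZ p k x : l p (k *: x) = k *: l p x by apply: (linZ (l2 p)).
have rxZ p k x : r (k *: x) p = k *: r x p by apply: (linZ (r1 p)).
have DZ k p : D (k *: p) = k *: D p by apply: (linZ HD).
have DD p q : D (p + q) = D p + D q by apply: (linD HD).
have Dsplit a u : D (a, u) = D (a, 0) + D (0, u) by rewrite -DD pairD addr0 add0r.
have D2Z k u : D (0, k *: u) = k *: D (0, u) by rewrite -DZ pairZ scaler0.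
split.
- move=> [_ hD].
  have d1lin : lin_map (fun a => D (a, 0)).
    by move=> k a b /=; rewrite -DZ -DD pairZ pairD scaler0 addr0.
  have d2lin : lin_map (fun u => D (0, u)).
    by move=> k a b /=; rewrite -DZ -DD pairZ pairD scaler0 addr0.
  exists (fun a => D (a, 0)), (fun u => D (0, u)); split => //.
  + split=> // a b /=.
    by have := hD (a,0) (b,0); rewrite /lau_mul /= !scaler0 mU0l !addr0 => ->.
  + split=> // a b /=.
    by have := hD (0,a) (0,b); rewrite /lau_mul /= th0 !scale0r !add0r mA0l => ->.
  + move=> a u /=; split.
      by have := hD (a,0) (0,u); rewrite /lau_mul /= th0 scale0r mA0r mU0l !addr0 D2Z; move/esym.
    by have := hD (0,u) (a,0); rewrite /lau_mul /= th0 scale0r mA0l mU0r !addr0 add0r D2Z addrC.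
- move=> [d1 [d2 [[d1l d2l] Dd [_ h1] [_ h2] hc]]].
  split=> // -[a u] [b v].
  rewrite /lau_mul /= !Dd (linD d2l) (linD d2l) (linZ d2l) (linZ d2l) h1 h2.
  rewrite (pairE a u) (pairE b v) !lD !lxD !rD !rxD.
  have [e1 e2] := hc a v.
  have [e3 e4] := hc b u.
  rewrite -e1 e4.

  by rewrite !addrA [LHS](ACl (1*3*6*7*2*5*4*8)).
Qed.
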